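(* A quantum score $S=(s,\mu)$ on $\mathcal X=\mathbb C^n$ is truthful if and only if there exist a convex function $F:\mathrm{Dens}(\mathcal X)\to\mathbb R$ and a selection of extended subgradients $\{d_\rho\in\overline{\partial}F(\rho)\}_{\rho\in\mathrm{Dens}(\mathcal X)}$ such that for all $\rho,\rho'\in\mathrm{Dens}(\mathcal X)$, $$S(\rho';\rho)=F(\rho')+\langle d_{\rho'},\rho-\rho'\rangle.$$ Moreover, $S$ is strictly truthful if and only if such a representation exists with $F$ strictly convex.
   Context: Let $\mathcal X=\mathbb C^n$. $\mathrm{Herm}(\mathcal X)$ is the real vector space of Hermitian $n\times n$ matrices with inner product $\langle X,Y\rangle=\mathrm{Tr}(X^*Y)$; $\mathrm{Pos}(\mathcal X)$ the positive semidefinite ones; $\mathrm{Dens}(\mathcal X)=\{\rho\in\mathrm{Pos}(\mathcal X):\mathrm{Tr}\rho=1\}$ (density matrices). A measurement with finite outcome set $\mathcal Y\subseteq\mathbb N$ is a family $\mu=\{\mu_y\}_{y\in\mathcal Y}$ with $\mu_y\in\mathrm{Pos}(\mathcal X)$ and $\sum_y\mu_y=I$; it induces the distribution $\langle\mu,\rho\rangle\in\Delta_{\mathcal Y}$ with $\langle\mu,\rho\rangle_y=\langle\mu_y,\rho\rangle$. $\mathrm{Meas}(\mathcal X)$ is the set of all measurements. Let $\overline{\mathbb R}=\mathbb R\cup\{\pm\infty\}$, with $0\cdot(\pm\infty)=0$. A quantum score is a pair $S=(s,\mu)$ with $s:\mathrm{Dens}(\mathcal X)\times\mathbb N\to\overline{\mathbb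 R}$ and $\mu:\mathrm{Dens}(\mathcal X)\to\mathrm{Meas}(\mathcal X)$, where $\mu(\rho')$ has outcome set $\mathcal Y(\rho')$; its expected score is $S(\rho';\rho)=\sum_{y\in\mathcal Y(\rho')}\langle\mu(\rho')_y,\rho\rangle s(\rho',y)$. $S$ is truthful if $S(\rho;\rho)\ge S(\rho';\rho)$ for all $\rho,\rho'$, and strictly truthful if the inequality is strict whenever $\rho'\ne\rho$. A function $\ell:\mathcal V\to\overline{\mathbb R}$ on a real vector space is extended linear if $\ell(\alpha v)=\alpha\ell(v)$ for all $\alpha\in\mathbb R$, and $\ell(v+v')=\ell(v)+\ell(v')$ whenever $\{\ell(v),\ell(v')\}\ne\{\infty,-\infty\}$; write $\langle d,x\rangle$ for $d(x)$. For a convex $G:C\to\mathbb R$ ($C$ convex, $G=+\infty$ outside $C$), an extended subgradient of $G$ at $x\in C$ is an extended linear $d$ with $G(x')\ge G(x)+\langle d,x'-x\rangle$ for all $x'\in C$; the set of these is $\overline\partial G(x)$. A selection of extended subgradients is a family $\{d_x\in\overline\partial G(x)\}_{x\in C}$ such that $\langle d_x,z-x\rangle\in\mathbb R\cup\{-\infty\}$ for all $x,z\in C$.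
   Formalization: Both equivalences assume that S(ρ;ρ) is finite for every density matrix ρ, and in the expected score a sum containing both +∞ and −∞ equals −∞. Apart from conventions, each condition added here is assumed in the paper as well or is needed for the statement above to hold. *)

(* Defs.v *)
From HB Require Import structures.
From mathcomp Require Import all_boot all_order all_algebra.
From mathcomp Require Import complex.
From mathcomp Require Import reals constructive_ereal.

Set Implicit Arguments.
Unset Strict Implicit.
Unset Printing Implicit Defensive.

Import Order.TTheory GRing.Theory Num.Theory.
Local Open Scope ring_scope.

Section QuantumScores.
Variables (R : realType) (n : nat).

Local Notation Mx := 'M[R[i]]_n.

Definition adjmx (A : Mx) : Mx := (map_mx (@conjc R) A)^T.

Definition herm (A : Mx) : Prop := adjmx A = A.

(* real scalar action on Herm(X) (Herm(X) is a real vector space) *)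
Definition rscale (a : R) (A : Mx) : Mx := (Complex a 0) *: A.

(* <X,Y> = Tr(X^* Y); it is real for Hermitian X, Y, and we take its real part *)
Definition hip (A B : Mx) : R := @complex.Re R (\tr (adjmx A *m B)).

Definition psd (A : Mx) : Prop :=
  herm A /\ forall v : 'cV[R[i]]_n, 0 <= ((map_mx (@conjc R) v)^T *m A *m v) 0 0.

Definition dens (rho : Mx) : Prop := psd rho /\ \tr rho = 1.

(* A measurement with finite outcome set Y ⊆ N: outcomes Y (duplicate-free list),
   effects mu y (only the values on Y matter). *)
Definition is_meas (Y : seq nat) (mu : nat -> Mx) : Prop :=
  uniq Y /\ (forall y, y \in Y -> psd (mu y)) /\ \sum_(y <- Y) mu y = 1%:M.

(* A quantum score S = (s, mu): s : Dens x N -> \bar R,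
   mu : Dens -> Meas, where mu(rho') has outcome set Y rho' and effects M rho'. *)
Definition quantum_score (Y : Mx -> seq nat) (M : Mx -> nat -> Mx) : Prop :=
  forall rho', dens rho' -> is_meas (Y rho') (M rho').

(* expected score S(rho'; rho) = sum_{y in Y(rho')} <mu(rho')_y, rho> s(rho', y)
   (with 0 * (+-oo) = 0, mathcomp's convention) *)
Definition exp_score (s : Mx -> nat -> \bar R) (Y : Mx -> seq nat)
    (M : Mx -> nat -> Mx) (rho' rho : Mx) : \bar R :=
  (\sum_(y <- Y rho') ((hip (M rho' y) rho)%:E * s rho' y))%E.

Definition truthful s Y M : Prop :=
  forall rho rho', dens rho -> dens rho' ->
    (exp_score s Y M rho' rho <= exp_score s Y M rho rho)%E.

Definition strictly_truthful s Y M : Prop :=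
  forall rho rho', dens rho -> dens rho' -> rho' <> rho ->
    (exp_score s Y M rho' rho < exp_score s Y M rho rho)%E.

Definition ext_linear (d : Mx -> \bar R) : Prop :=
  (forall (a : R) (X : Mx), herm X -> d (rscale a X) = (a%:E * d X)%E) /\
  (forall X X' : Mx, herm X -> herm X' ->
     ~ (d X = +oo%E /\ d X' = -oo%E) -> ~ (d X = -oo%E /\ d X' = +oo%E) ->
     d (X + X') = (d X + d X')%E).

Definition convex_on_dens (F : Mx -> R) : Prop :=
  forall (rho1 rho2 : Mx) (t : R), dens rho1 -> dens rho2 -> 0 <= t <= 1 ->
    F (rscale t rho1 + rscale (1 - t) rho2) <= t * F rho1 + (1 - t) * F rho2.

Definition strictly_convex_on_dens (F : Mx -> R) : Prop :=
  forall (rho1 rho2 : Mx) (t : R), dens rho1 -> dens rho2 -> rho1 <> rho2 ->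
    0 < t < 1 ->
    F (rscale t rho1 + rscale (1 - t) rho2) < t * F rho1 + (1 - t) * F rho2.

Definition ext_subgrad (F : Mx -> R) (x : Mx) (d : Mx -> \bar R) : Prop :=
  ext_linear d /\
  forall x', dens x' -> ((F x)%:E + d (x' - x)%R <= (F x')%:E)%E.

Definition subgrad_selection (F : Mx -> R) (d : Mx -> Mx -> \bar R) : Prop :=
  (forall x, dens x -> ext_subgrad F x (d x)) /\
  (forall x z, dens x -> dens z -> d x (z - x) <> +oo%E).

Definition represents s Y M (F : Mx -> R) (d : Mx -> Mx -> \bar R) : Prop :=
  forall rho rho', dens rho -> dens rho' ->
    exp_score s Y M rho' rho = ((F rho')%:E + d rho' (rho - rho')%R)%E.

Definition regular_score s Y M : Prop :=
  forall rho, dens rho -> exp_score s Y M rho rho \is a fin_num.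

End QuantumScores.

(* Main.v *)
Require Import Defs.
From HB Require Import structures.
From mathcomp Require Import all_boot all_order all_algebra.
From mathcomp Require Import complex.
From mathcomp Require Import reals constructive_ereal.
From mathcomp Require Import spectral sesquilinear.
From mathcomp Require Import ring lra.
Set Implicit Arguments.
Unset Strict Implicit.
Unset Printing Implicit Defensive.
Import Order.TTheory GRing.Theory Num.Theory.
Local Open Scope ring_scope.

Section Mat.
Variables (R : realType) (n : nat).
Local Notation Mx := 'M[R[i]]_n.

Lemma ReD (x y : R[i]) : complex.Re (x + y) = complex.Re x + complex.Re y.
Proof. by case: x; case: y. Qed.
Lemma ReN (x : R[i]) : complex.Re (- x) = - complex.Re x.
Proof. by case: x. Qed.
Lemma ReMr (a : R) (x : R[i]) : complex.Re (Complex a 0 * x) = a * complex.Re x.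
Proof. by case: x => u v /=; rewrite mul0r subr0. Qed.

Lemma rscaleE a (A : Mx) : rscale a A = (Complex a 0) *: A.
Proof. by []. Qed.

Lemma hipD (A B C : Mx) : hip A (B + C) = hip A B + hip A C.
Proof. by rewrite /hip mulmxDr mxtraceD ReD. Qed.
Lemma hipN (A B : Mx) : hip A (- B) = - hip A B.
Proof. by rewrite /hip mulmxN raddfN ReN. Qed.
Lemma hipB (A B C : Mx) : hip A (B - C) = hip A B - hip A C.
Proof. by rewrite hipD hipN. Qed.
Lemma hipZ (A : Mx) a (B : Mx) : hip A (rscale a B) = a * hip A B.
Proof. by rewrite /hip /rscale -scalemxAr mxtraceZ ReMr. Qed.
Local Notation ct M := (map_mx Num.conj (trmx M)).

Lemma adjE (A : Mx) : adjmx A = ct A.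
Proof. by rewrite /adjmx map_trmx. Qed.

Lemma quad_ge0 (P X : Mx) i : psd X -> 0 <= (P *m X *m (ct P)) i i.
Proof.
move=> [_ hX]; have := hX (col i ((ct P))).
suff -> : ((map_mx (@conjc R) (col i (ct P)))^T *m X *m col i (ct P)) 0 0
          = (P *m X *m (ct P)) i i by [].
rewrite !mxE; apply: eq_bigr => k _; rewrite !mxE; congr (_ * _).
apply: eq_bigr => l _; rewrite !mxE /=.
by rewrite conjcK.
Qed.

Lemma Re_ge0 (x : R[i]) : 0 <= x -> 0 <= complex.Re x.
Proof. by rewrite lecE => /andP[]. Qed.

Lemma psd_ge0 (A B : Mx) : psd A -> psd B -> 0 <= hip A B.
Proof.
move=> pA pB; have hA := pA.1; have hB := pB.1.
have nB : B \is normalmx.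
  by rewrite qualifE -adjE hB.
have EB := orthomx_spectralP nB.
set P := spectralmx B in EB; set D := spectral_diag B in EB.
have UP : P \is unitarymx by exact: spectral_unitarymx.
have iP : invmx P = (ct P) by rewrite invmx_unitary.
have PP : P *m (ct P) = 1%:M by apply/unitarymxP.
rewrite /hip hA EB iP.
have -> : A *m ((ct P) *m diag_mx D *m P) = (A *m (ct P) *m diag_mx D) *m P.
  by rewrite !mulmxA.
rewrite mxtrace_mulC !mulmxA mul_mx_diag /mxtrace.
apply: Re_ge0; apply: sumr_ge0 => i _.
rewrite [X in 0 <= X]mxE.
apply: mulr_ge0; first exact: quad_ge0 pA.
have : (P *m B *m (ct P)) i i = D 0 i.
  rewrite EB iP !mulmxA PP mul1mx -mulmxA PP mulmx1 mxE eqxx mulr1n //.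
by move=> <-; exact: quad_ge0.
Qed.
Local Open Scope complex_scope.
Lemma CE (a : R) : Complex a 0 = a%:C.
Proof. by []. Qed.
Lemma C0E : (0 : R)%:C = 0. Proof. by []. Qed.
Lemma CsubE (a b : R) : (a - b)%:C = a%:C - b%:C.
Proof. by rewrite rmorphB. Qed.
Lemma C1E : (1 : R)%:C = 1. Proof. by []. Qed.
Lemma CmulE (a b : R) : (a * b)%:C = a%:C * b%:C.
Proof. by rewrite rmorphM. Qed.
Local Close Scope complex_scope.

Lemma rscale0 (X : Mx) : rscale 0 X = 0.
Proof. by rewrite rscaleE CE C0E scale0r. Qed.

Lemma herm0 : herm (0 : Mx).
Proof. by rewrite /herm /adjmx map_mx0 trmx0. Qed.
Lemma hermD (A B : Mx) : herm A -> herm B -> herm (A + B).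
Proof. by rewrite /herm /adjmx map_mxD raddfD /= => -> ->. Qed.
Lemma hermN (A : Mx) : herm A -> herm (- A).
Proof. by rewrite /herm /adjmx map_mxN raddfN /= => ->. Qed.
Lemma hermB (A B : Mx) : herm A -> herm B -> herm (A - B).
Proof. by move=> hA hB; apply: hermD => //; apply: hermN. Qed.
Lemma hermZ a (A : Mx) : herm A -> herm (rscale a A).
Proof.
rewrite /herm /adjmx rscaleE => hA; rewrite -{2}hA.
apply/matrixP => i j; rewrite !mxE /=.
by rewrite rmorphM /= ; congr (_ * _); rewrite /= oppr0.
Qed.

Lemma dens_comb (r1 r2 : Mx) t : dens r1 -> dens r2 -> 0 <= t <= 1 ->
  dens (rscale t r1 + rscale (1 - t) r2).
Proof.
move=> [[h1 q1] t1] [[h2 q2] t2] /andP[t0 t1'].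
split; first split.
- by apply: hermD; apply: hermZ.
- move=> v; rewrite mulmxDr mulmxDl !rscaleE -!scalemxAr -!scalemxAl mxE.
  rewrite [X in X + _]mxE [X in _ + X]mxE.
  apply: addr_ge0; apply: mulr_ge0; rewrite ?q1 ?q2 // CE lecR; lra.
- rewrite mxtraceD !rscaleE !mxtraceZ t1 t2 !mulr1 !CE CsubE C1E.
  by rewrite addrC subrK.
Qed.
Ltac mxid := apply/matrixP => i j; rewrite /rscale !mxE !CE ?CsubE ?C1E ?C0E; ring.

Definition cmb (r1 r2 : Mx) t := rscale t r1 + rscale (1 - t) r2.

Lemma comb_id (r1 r2 : Mx) t :
  rscale t (r1 - cmb r1 r2 t) + rscale (1 - t) (r2 - cmb r1 r2 t) = 0.
Proof. rewrite /cmb; mxid. Qed.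
Lemma comb_t0 (r1 r2 : Mx) : cmb r1 r2 0 = r2.
Proof. rewrite /cmb; mxid. Qed.
Lemma comb_t1 (r1 r2 : Mx) : cmb r1 r2 1 = r1.
Proof. rewrite /cmb; mxid. Qed.
Lemma mid_id (r r' : Mx) : cmb r r' (1/2) - r' = rscale (1/2) (r - r').
Proof. rewrite /cmb; mxid. Qed.
Lemma comb_sub1 (r1 r2 : Mx) t : cmb r1 r2 t - r1 = rscale (1 - t) (r2 - r1).
Proof. rewrite /cmb; mxid. Qed.
Lemma comb_sub2 (r1 r2 : Mx) t : cmb r1 r2 t - r2 = rscale t (r1 - r2).
Proof. rewrite /cmb; mxid. Qed.

Lemma rscale_eq0 a (X : Mx) : a != 0 -> rscale a X = 0 -> X = 0.
Proof.
move=> a0 /eqP; rewrite rscaleE scalemx_eq0 => /orP[|/eqP//].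
by rewrite CE (inj_eq (@complexI _)) (negbTE a0).
Qed.

Lemma comb_neq1 (r1 r2 : Mx) t : r1 <> r2 -> t < 1 -> cmb r1 r2 t <> r1.
Proof.
move=> ne t1 e; apply: ne; apply/esym/eqP; rewrite -subr_eq0; apply/eqP.
apply: (@rscale_eq0 (1 - t)); first by rewrite subr_eq0 gt_eqF.
by rewrite -comb_sub1 e subrr.
Qed.
Lemma comb_neq2 (r1 r2 : Mx) t : r1 <> r2 -> 0 < t -> cmb r1 r2 t <> r2.
Proof.
move=> ne t1 e; apply: ne; apply/eqP; rewrite -subr_eq0; apply/eqP.
apply: (@rscale_eq0 t); first by rewrite gt_eqF.
by rewrite -comb_sub2 e subrr.
Qed.
End Mat.


Section Lex.
Variable R : realType.
Definition lex (a b f : R) : \bar R :=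
  if 0 < a then -oo%E else if a < 0 then +oo%E else
  if 0 < b then +oo%E else if b < 0 then -oo%E else f%:E.

Variant lex_spec (a b f : R) : \bar R -> Type :=
 | LexN of 0 < a : lex_spec a b f -oo
 | LexP of a < 0 : lex_spec a b f +oo
 | LexBP of a = 0 & 0 < b : lex_spec a b f +oo
 | LexBN of a = 0 & b < 0 : lex_spec a b f -oo
 | LexF of a = 0 & b = 0 : lex_spec a b f f%:E.

Lemma lexP a b f : lex_spec a b f (lex a b f).
Proof.
rewrite /lex; case: ltgtP => ha; first by constructor.
  by constructor.
case: ltgtP => hb; by constructor.
Qed.

Lemma mNy_p (c : R) : 0 < c -> (c%:E * -oo = -oo)%E.
Proof. by move=> h; rewrite muleC gt0_mulNye ?lte_fin. Qed.
Lemma my_p (c : R) : 0 < c -> (c%:E * +oo = +oo)%E.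
Proof. by move=> h; rewrite muleC gt0_mulye ?lte_fin. Qed.
Lemma mNy_n (c : R) : c < 0 -> (c%:E * -oo = +oo)%E.
Proof. by move=> h; rewrite muleC lt0_mulNye ?lte_fin. Qed.
Lemma my_n (c : R) : c < 0 -> (c%:E * +oo = -oo)%E.
Proof. by move=> h; rewrite muleC lt0_mulye ?lte_fin. Qed.

Lemma lexZ c a b f : lex (c * a) (c * b) (c * f) = (c%:E * lex a b f)%E.
Proof.
case: (ltgtP c 0) => hc; last first.
- subst c; rewrite !mul0r mul0e /lex ltxx; by [].
all: case: (lexP (c*a) (c*b) (c*f)) => *; case: (lexP a b f) => *;
  rewrite ?(mNy_n hc) ?(my_n hc) ?(mNy_p hc) ?(my_p hc) //; try (exfalso; nra).
Qed.
Lemma lexD a1 b1 f1 a2 b2 f2 :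
  ~ (lex a1 b1 f1 = +oo /\ lex a2 b2 f2 = -oo)%E ->
  ~ (lex a1 b1 f1 = -oo /\ lex a2 b2 f2 = +oo)%E ->
  lex (a1 + a2) (b1 + b2) (f1 + f2) = (lex a1 b1 f1 + lex a2 b2 f2)%E.
Proof.
case: (lexP a1 b1 f1) => [?|?|? ?|? ?|? ?]; case: (lexP a2 b2 f2) => [?|?|? ?|? ?|? ?];
case: (lexP (a1 + a2) (b1 + b2) (f1 + f2)) => *;
  try (exfalso; lra);
  try (exfalso; match goal with H : ~ _ |- _ => by apply: H end);
  rewrite ?addNye ?addeNy ?addye ?addey ?EFinD //.
Qed.
Lemma lex_shift a b f c : lex a b f = (c%:E + lex a b (f - c))%E.
Proof.
case: (lexP a b f) => [?|?|? ?|? ?|? ?]; case: (lexP a b (f - c)) => *;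
  try (exfalso; lra); rewrite ?addeNy ?addey //.
by rewrite -EFinD addrC subrK.
Qed.

Lemma psum_ge0 (l : seq nat) (P : pred nat) (g : nat -> R) :
  (forall y, y \in l -> P y -> 0 <= g y) -> 0 <= \sum_(y <- l | P y) g y.
Proof.
move=> H; rewrite big_seq_cond; apply: sumr_ge0 => y /andP[yl Py]; exact: H.
Qed.

Lemma psum_pos (l : seq nat) (P : pred nat) (g : nat -> R) :
  (forall y, y \in l -> P y -> 0 <= g y) ->
  (exists y, [/\ y \in l, P y & 0 < g y]) -> 0 < \sum_(y <- l | P y) g y.
Proof.
move=> H [y [yl Py gy]]; rewrite (big_rem y yl) Py /=.
have : 0 <= \sum_(i <- rem y l | P i) g i.
  by apply: psum_ge0 => z zl Pz; apply: H => //; exact: (mem_rem zl).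
lra.
Qed.

Lemma psum_0 (l : seq nat) (P : pred nat) (g : nat -> R) :
  (forall y, y \in l -> P y -> g y = 0) -> \sum_(y <- l | P y) g y = 0.
Proof. by move=> H; apply: big1_seq => y /andP[Py yl]; exact: H. Qed.
End Lex.


Section Generic.
Variables (R : realType) (n : nat).
Local Notation Mx := 'M[R[i]]_n.

Lemma dens_herm (r : Mx) : dens r -> herm r.
Proof. by case=> [[]]. Qed.

Lemma d_zero (F : Mx -> R) d (r : Mx) : subgrad_selection F d -> dens r -> d r 0 = 0%E.
Proof.
move=> [sg _] dr; have [[lin _] _] := sg r dr.
by rewrite -(rscale0 0) lin ?mul0e //; exact: herm0.
Qed.

Lemma scale_ny (t : R) e : 0 <= t -> e <> +oo%E -> (t%:E * e <> +oo)%E.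
Proof.
move=> t0; case: e => [r| |] //= _.
have [->|tp] := eqVneq t 0; first by rewrite mul0e.
by rewrite mNy_p // lt_def tp.
Qed.

Lemma comb_sum (F : Mx -> R) d (r1 r2 rt : Mx) t :
  subgrad_selection F d -> dens r1 -> dens r2 -> dens rt -> 0 <= t <= 1 ->
  rscale t (r1 - rt) + rscale (1 - t) (r2 - rt) = 0 ->
  ((t%:E * d rt (r1 - rt)%R) + ((1 - t)%:E * d rt (r2 - rt)%R) = 0)%E.
Proof.
move=> sel d1 d2 dt /andP[t0 t1] E.
have [[linZ linD] sg] := sel.1 _ dt.
have n1 := sel.2 _ _ dt d1; have n2 := sel.2 _ _ dt d2.
have h1 : herm (r1 - rt) by apply: hermB; apply: dens_herm.
have h2 : herm (r2 - rt) by apply: hermB; apply: dens_herm.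
have s1 : 0 <= 1 - t by lra.
rewrite -linZ // -linZ // -linD ?E ?(d_zero sel dt) //; try (apply: hermZ => //).
- by rewrite !linZ // => -[H1 H2]; exact: (scale_ny t0 n1 H1).
- by rewrite !linZ // => -[H1 H2]; exact: (scale_ny s1 n2 H2).
Qed.

Lemma conv_of (F : Mx -> R) d : subgrad_selection F d -> convex_on_dens F.
Proof.
move=> sel r1 r2 t d1 d2 ht.
rewrite -/(cmb r1 r2 t).
have dt : dens (cmb r1 r2 t) := dens_comb d1 d2 ht.
have E := comb_id r1 r2 t.
have T0 : t = 0 -> cmb r1 r2 t = r2 by move=> ->; rewrite comb_t0.
have T1 : t = 1 -> cmb r1 r2 t = r1 by move=> ->; rewrite comb_t1.
move: (cmb r1 r2 t) dt E T0 T1 => rt dt E T0 T1.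
have S := comb_sum sel d1 d2 dt ht E.
have g1 := (sel.1 _ dt).2 _ d1; have g2 := (sel.1 _ dt).2 _ d2.
have n1 := sel.2 _ _ dt d1; have n2 := sel.2 _ _ dt d2.
move: ht => /andP[t0 t1].
move: (d rt (r1 - rt)) (d rt (r2 - rt)) S g1 g2 n1 n2 => e1 e2.
case: e1 => [x1| |]; case: e2 => [x2| |] //= S g1 g2 _ _.
- move: S g1 g2; rewrite -!EFinM -!EFinD !lee_fin => /eqP; rewrite eqe => /eqP S g1 g2.
  nra.
- have [h|h] : 1 - t = 0 \/ 0 < 1 - t by lra.
    have te : t = 1 by lra.
    by rewrite T1 // te; lra.
  by move: S; rewrite (mNy_p h) addeNy.
- have [h|h] : t = 0 \/ 0 < t by lra.
    by rewrite T0 // h; lra.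
  by move: S; rewrite (mNy_p h) addNye.
- have [h|h] : t = 0 \/ 0 < t by lra.
    by rewrite T0 // h; lra.
  by move: S; rewrite (mNy_p h) addNye.
Qed.
Lemma sconv_of (F : Mx -> R) d : subgrad_selection F d ->
  (forall r r' : Mx, dens r -> dens r' -> r' <> r ->
     ((F r')%:E + d r' (r - r')%R < (F r)%:E)%E) ->
  strictly_convex_on_dens F.
Proof.
move=> sel st r1 r2 t d1 d2 ne ht.
rewrite -/(cmb r1 r2 t).
have ht' : 0 <= t <= 1 by move: ht => /andP[? ?]; apply/andP; split; lra.
have dt : dens (cmb r1 r2 t) := dens_comb d1 d2 ht'.
have E := comb_id r1 r2 t.
move: ht => /andP[t0 t1].
have N1 := comb_neq1 ne t1.
have N2 := comb_neq2 ne t0.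
move: (cmb r1 r2 t) dt E N1 N2 => rt dt E N1 N2.
have S := comb_sum sel d1 d2 dt ht' E.
have g1 := st _ _ d1 dt N1; have g2 := st _ _ d2 dt N2.
have n1 := sel.2 _ _ dt d1; have n2 := sel.2 _ _ dt d2.
move: (d rt (r1 - rt)) (d rt (r2 - rt)) S g1 g2 n1 n2 => e1 e2.
have h1 : 0 < 1 - t by lra.
case: e1 => [x1| |]; case: e2 => [x2| |] //= S g1 g2 _ _.
- move: S g1 g2; rewrite -!EFinM -!EFinD !lte_fin => /eqP; rewrite eqe => /eqP S g1 g2.
  nra.
- by move: S; rewrite (mNy_p h1) addeNy.
- by move: S; rewrite (mNy_p t0) addNye.
- by move: S; rewrite (mNy_p t0) addNye.
Qed.

Lemma mid_strict (F : Mx -> R) d : strictly_convex_on_dens F -> subgrad_selection F d ->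
  forall r r' : Mx, dens r -> dens r' -> r' <> r ->
     ((F r')%:E + d r' (r - r')%R < (F r)%:E)%E.
Proof.
move=> sc sel r r' dr dr' ne.
have hh : 0 <= (1/2 : R) <= 1.
  apply/andP; split; lra.
have dm : dens (cmb r r' (1/2)) := dens_comb dr dr' hh.
have [[linZ _] sg] := sel.1 _ dr'.
have g := sg _ dm.
rewrite mid_id linZ in g; last by apply: hermB; apply: dens_herm.
have sc' := sc r r' (1/2) dr dr' (nesym ne).
rewrite -/(cmb r r' (1/2)) in sc'.
have q : 0 < (1/2 : R) < 1 by apply/andP; split; lra.
have := sc' q.
have := sel.2 _ _ dr' dr.
move: g; move: (d r' (r - r')) => e.
case: e => [x| |] //= g _ lt.
- move: g; rewrite -EFinM -EFinD lee_fin lte_fin => g.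
  lra.
- by rewrite addeNy ltNye.
Qed.
End Generic.

Section Main.
Variables (R : realType) (n : nat).
Local Notation Mx := 'M[R[i]]_n.
Variables (s : Mx -> nat -> \bar R) (Y : Mx -> seq nat) (M : Mx -> nat -> Mx).

Lemma rep_truthful F d : subgrad_selection F d -> represents s Y M F d ->
  truthful s Y M.
Proof.
move=> sel rep r r' dr dr'.
rewrite (rep r r' dr dr') (rep r r dr dr) subrr (d_zero sel dr) adde0.
exact: (sel.1 r' dr').2 r dr.
Qed.

Lemma rep_strict F d : strictly_convex_on_dens F -> subgrad_selection F d ->
  represents s Y M F d -> strictly_truthful s Y M.
Proof.
move=> sc sel rep r r' dr dr' ne.
rewrite (rep r r' dr dr') (rep r r dr dr) subrr (d_zero sel dr) adde0.
exact: mid_strict.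
Qed.

Lemma strict_sub F d : subgrad_selection F d -> represents s Y M F d ->
  strictly_truthful s Y M ->
  forall r r' : Mx, dens r -> dens r' -> r' <> r ->
     ((F r')%:E + d r' (r - r')%R < (F r)%:E)%E.
Proof.
move=> sel rep st r r' dr dr' ne.
have := st r r' dr dr' ne.
by rewrite (rep r r' dr dr') (rep r r dr dr) subrr (d_zero sel dr) adde0.
Qed.

Lemma strict_truthful_truthful : strictly_truthful s Y M -> truthful s Y M.
Proof.
move=> st r r' dr dr'; have [->|ne] := eqVneq r' r; first by [].
by apply/ltW/st => // /eqP; rewrite (negbTE ne).
Qed.
End Main.


Section Forward.
Variables (R : realType) (n : nat).
Local Notation Mx := 'M[R[i]]_n.
Variables (s : Mx -> nat -> \bar R) (Y : Mx -> seq nat) (M : Mx -> nat -> Mx).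
Hypotheses (QS : quantum_score Y M) (REG : regular_score s Y M).

Definition finp r' (X : Mx) := \sum_(y <- Y r' | s r' y \is a fin_num) hip (M r' y) X * fine (s r' y).
Definition amp r' (X : Mx) := \sum_(y <- Y r' | s r' y == -oo%E) hip (M r' y) X.
Definition bpp r' (X : Mx) := \sum_(y <- Y r' | s r' y == +oo%E) hip (M r' y) X.
Definition Dg r' X := lex (amp r' X) (bpp r' X) (finp r' X).
Definition Fg r := fine (exp_score s Y M r r).

Lemma ampD r' X X' : amp r' (X + X') = amp r' X + amp r' X'.
Proof. by rewrite /amp -big_split; apply: eq_bigr => y _; rewrite hipD. Qed.
Lemma ampZ r' a X : amp r' (rscale a X) = a * amp r' X.
Proof. by rewrite /amp mulr_sumr; apply: eq_bigr => y _; rewrite hipZ. Qed.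
Lemma ampB r' X X' : amp r' (X - X') = amp r' X - amp r' X'.
Proof. by rewrite /amp -sumrB; apply: eq_bigr => y _; rewrite hipB. Qed.
Lemma bppD r' X X' : bpp r' (X + X') = bpp r' X + bpp r' X'.
Proof. by rewrite /bpp -big_split; apply: eq_bigr => y _; rewrite hipD. Qed.
Lemma bppZ r' a X : bpp r' (rscale a X) = a * bpp r' X.
Proof. by rewrite /bpp mulr_sumr; apply: eq_bigr => y _; rewrite hipZ. Qed.
Lemma bppB r' X X' : bpp r' (X - X') = bpp r' X - bpp r' X'.
Proof. by rewrite /bpp -sumrB; apply: eq_bigr => y _; rewrite hipB. Qed.
Lemma finpD r' X X' : finp r' (X + X') = finp r' X + finp r' X'.
Proof. by rewrite /finp -big_split; apply: eq_bigr => y _; rewrite hipD mulrDl. Qed.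
Lemma finpZ r' a X : finp r' (rscale a X) = a * finp r' X.
Proof. by rewrite /finp mulr_sumr; apply: eq_bigr => y _; rewrite hipZ mulrA. Qed.
Lemma finpB r' X X' : finp r' (X - X') = finp r' X - finp r' X'.
Proof. by rewrite /finp -sumrB; apply: eq_bigr => y _; rewrite hipB mulrBl. Qed.

Lemma hpos r' r y : dens r' -> dens r -> y \in Y r' -> 0 <= hip (M r' y) r.
Proof.
move=> dr' dr yl; apply: psd_ge0; last exact: dr.1.
by have [_ [P _]] := QS dr'; exact: P.
Qed.

Lemma key r' r : dens r' -> dens r -> exp_score s Y M r' r = Dg r' r.
Proof.
move=> dr' dr; rewrite /exp_score /Dg.
have pos := fun y => @hpos r' r y dr' dr.
case A : (has (fun y => (s r' y == -oo%E) && (0 < hip (M r' y) r)) (Y r')).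
  move/hasP: A => [y yl /andP[/eqP sy hy]].
  have ap : 0 < amp r' r.
    apply: psum_pos; first by move=> z zl _; exact: pos.
    by exists y; split => //; rewrite sy.
  rewrite /lex ap.
  apply/esum_eqNyP; exists y; split => //.
  by rewrite sy (mNy_p hy).
have nA := negbT A; move/hasPn: nA => nA.
have a0 : amp r' r = 0.
  apply: psum_0 => z zl sz; have := nA z zl; rewrite sz /= -leNgt => h.
  by apply/le_anti; rewrite h pos.
case B : (has (fun y => (s r' y == +oo%E) && (0 < hip (M r' y) r)) (Y r')).
  move/hasP: B => [y yl /andP[/eqP sy hy]].
  have bp : 0 < bpp r' r.
    apply: psum_pos; first by move=> z zl _; exact: pos.
    by exists y; split => //; rewrite sy.
  rewrite /lex a0 ltxx bp.
  rewrite big_seq; apply/esum_eqyP.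
    move=> z zl; rewrite mule_eq_ninfty !lte_fin.
    have := nA z zl; have := pos z zl.
    case: (s r' z) => [x| |] //=; rewrite ?andbF ?andbT ?orbF //.
    by move=> p _; rewrite /= -leNgt.
  by exists y; split => //; rewrite sy (my_p hy).
have nB := negbT B; move/hasPn: nB => nB.
have b0 : bpp r' r = 0.
  apply: psum_0 => z zl sz; have := nB z zl; rewrite sz /= -leNgt => h.
  by apply/le_anti; rewrite h pos.
rewrite /lex a0 b0 ltxx /finp -sumEFin [RHS]big_mkcond /=.
apply: eq_big_seq => y yl.
have := nA y yl; have := nB y yl; have := pos y yl.
case: (s r' y) => [x| |] //= p; rewrite ?mul0e //.
- move=> h _; have -> : hip (M r' y) r = 0 by apply/le_anti; rewrite -leNgt in h; rewrite h p.
  by rewrite mul0e.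
- move=> _ h; have -> : hip (M r' y) r = 0 by apply/le_anti; rewrite -leNgt in h; rewrite h p.
  by rewrite mul0e.
Qed.

Lemma reg_zero r' y : dens r' -> y \in Y r' -> s r' y \isn't a fin_num ->
  hip (M r' y) r' = 0.
Proof.
move=> dr' yl nf; have := REG dr'; rewrite /exp_score sum_fin_num => /allP.
move=> /(_ ((hip (M r' y) r')%:E * s r' y)%E).
have -> : ((hip (M r' y) r')%:E * s r' y)%E \in
    [seq ((hip (M r' i) r')%:E * s r' i)%E | i <- [seq i <- Y r' | true]].
  by apply: map_f; rewrite mem_filter yl.
move=> /(_ isT); move: nf.
case: (s r' y) => [x| |] //= _;
  case: (ltgtP (hip (M r' y) r') 0) => h //;
  rewrite ?(my_n h) ?(my_p h) ?(mNy_n h) ?(mNy_p h) //.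
Qed.

Lemma ab0 r' : dens r' -> amp r' r' = 0 /\ bpp r' r' = 0.
Proof.
move=> dr'; split; apply: psum_0 => z zl /eqP sz; apply: reg_zero => //; by rewrite sz.
Qed.

Lemma Fg_fin r' : dens r' -> Fg r' = finp r' r'.
Proof.
move=> dr'; have [a0 b0] := ab0 dr'.
by rewrite /Fg key // /Dg a0 b0 /lex ltxx.
Qed.

Lemma Fg_E r : dens r -> exp_score s Y M r r = (Fg r)%:E.
Proof. by move=> dr; rewrite /Fg fineK //; exact: REG. Qed.

Lemma rep_g : represents s Y M Fg Dg.
Proof.
move=> r r' dr dr'; have [a0 b0] := ab0 dr'.
rewrite key // /Dg ampB bppB finpB a0 b0 !subr0 (Fg_fin dr').
exact: lex_shift.
Qed.

Lemma sel_g : truthful s Y M -> subgrad_selection Fg Dg.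
Proof.
move=> TR; split.
- move=> r' dr'; split.
    split.
      by move=> a X _; rewrite /Dg ampZ bppZ finpZ lexZ.
    by move=> X X' _ _; rewrite /Dg ampD bppD finpD; exact: lexD.
  move=> x' dx'; rewrite -rep_g // -Fg_E //; exact: TR.
- move=> x z dx dz E; have := TR z x dz dx.
  by rewrite rep_g // E addey // Fg_E.
Qed.
End Forward.

Local Close Scope ring_scope.
Unset Implicit Arguments.

Theorem theorem3p1 (R : realType) (n : nat)
    (s : 'M[R[i]]_n -> nat -> \bar R) (Y : 'M[R[i]]_n -> seq nat)
    (M : 'M[R[i]]_n -> nat -> 'M[R[i]]_n) :
  quantum_score Y M ->
  regular_score s Y M ->
  (truthful s Y M <->
     exists (F : 'M[R[i]]_n -> R) (d : 'M[R[i]]_n -> 'M[R[i]]_n -> \bar R),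
       convex_on_dens F /\ subgrad_selection F d /\ represents s Y M F d) /\
  (strictly_truthful s Y M <->
     exists (F : 'M[R[i]]_n -> R) (d : 'M[R[i]]_n -> 'M[R[i]]_n -> \bar R),
       strictly_convex_on_dens F /\ subgrad_selection F d /\ represents s Y M F d).
Proof.
move=> QS REG; split; split.
- move=> TR; exists (Fg s Y M), (Dg s Y M).
  have sel := sel_g QS REG TR.
  by split; [exact: conv_of sel | split => //; exact: rep_g].
- by move=> [F [d [_ [sel rep]]]]; exact: rep_truthful sel rep.
- move=> ST; have TR := strict_truthful_truthful ST.
  exists (Fg s Y M), (Dg s Y M).
  have sel := sel_g QS REG TR; have rep := rep_g QS REG.
  split; last by split.
  exact: (sconv_of sel (strict_sub sel rep ST)).
- by move=> [F [d [sc [sel rep]]]]; exact: rep_strict sc sel rep.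
Qed.
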